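(* Let $m$ be a positive integer whose Collatz trajectory $\{T^k(m)\}_{k=1}^\infty$ is unbounded (diverging). Then the function \[ F(z)=\sum_{p=0}^\infty z^{m2^p}+\sum_{k=1}^\infty z^{T^k(m)} \] belongs to $A(D)$ and is a fixed point of $\mathcal{T}$: $\mathcal{T}F=F$.
   Context: $T:\mathbb{Z}\to\mathbb{Z}$ is the (reduced) Collatz map: $T(n)=\frac{3n+1}{2}$ for odd $n$, $T(n)=\frac n2$ for even $n$; $T^k$ is its $k$-th iterate. $D$ is the open unit disk and $A(D)$ the space of holomorphic functions on $D$. The operator $\mathcal{T}$ is defined on $A(D)$ by $\mathcal{T}\big(\sum_{n\ge0}a_nz^n\big)=\sum_{n\ge0}a_nz^{T(n)}$, i.e. $\mathcal{T}z^n=z^{T(n)}$ (equivalently $\mathcal{T}f(z)=(Sf)(\sqrt z)+\sqrt z\,(Af)(z^{3/2})$ with $S,A$ the even and odd parts of $f$). *)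

(* Defs.v *)
From Stdlib Require Import Reals Arith.
From Coquelicot Require Import Coquelicot.
Open Scope R_scope.

Definition T (n : nat) : nat :=
  if Nat.odd n then ((3 * n + 1) / 2)%nat else (n / 2)%nat.

Definition Titer (k n : nat) : nat := Nat.iter k T n.

Definition unbounded_trajectory (m : nat) : Prop :=
  forall B : nat, exists k : nat, (1 <= k)%nat /\ (B < Titer k m)%nat.

Definition inD (z : C) : Prop := Cmod z < 1.

(* value of a complex series, taken componentwise (meaningful when it converges) *)
Definition Cseries (u : nat -> C) : C :=
  (Series (fun n => fst (u n)), Series (fun n => snd (u n))).

Definition in_AD (f : C -> C) : Prop :=
  forall z : C, inD z -> ex_derive (K := C_AbsRing) (V := C_NormedModule) f z.

Definition power_series_rep (a : nat -> C) (f : C -> C) : Prop :=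
  forall z : C, inD z ->
    is_series (K := C_AbsRing) (V := C_NormedModule) (fun n => (a n * Cpow z n)%C) (f z).

(* g = 𝒯 f, where 𝒯 (sum a_n z^n) = sum a_n z^{T(n)}, for f with coefficients a *)
Definition collatz_op_image (a : nat -> C) (g : C -> C) : Prop :=
  forall z : C, inD z ->
    is_series (K := C_AbsRing) (V := C_NormedModule) (fun n => (a n * Cpow z (T n))%C) (g z).

Definition F_part1 (m : nat) (z : C) : nat -> C := fun p => Cpow z (m * 2 ^ p).
Definition F_part2 (m : nat) (z : C) : nat -> C := fun k => Cpow z (Titer (S k) m).

Definition F (m : nat) (z : C) : C :=
  (Cseries (F_part1 m z) + Cseries (F_part2 m z))%C.

(* Main.v *)
Require Import Defs.
From Stdlib Require Import Reals Arith.
From Coquelicot Require Import Coquelicot.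
Open Scope R_scope.
From Stdlib Require Import Lia Lra ClassicalEpsilon.

Fixpoint ps (f : nat -> R) (n : nat) : R :=
  match n with 0%nat => 0 | S n => ps f n + f n end.

Lemma ps_sum_f f n : ps f (S n) = sum_f_R0 f n.
Proof. induction n; simpl in *. ring. rewrite <- IHn. simpl. ring. Qed.

Lemma ps_ext f g n : (forall j, (j < n)%nat -> f j = g j) -> ps f n = ps g n.
Proof. induction n; intros H; simpl; auto. rewrite IHn, H; auto. Qed.

Lemma ps_minus f g n : ps (fun j => f j - g j) n = ps f n - ps g n.
Proof. induction n; simpl; [ring| rewrite IHn; ring]. Qed.

Lemma ps_plus f g n : ps (fun j => f j + g j) n = ps f n + ps g n.
Proof. induction n; simpl; [ring| rewrite IHn; ring]. Qed.

Lemma ps_abs_le f h n : (forall j, Rabs (f j) <= h j) -> Rabs (ps f n) <= ps h n.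
Proof. intros H; induction n; simpl. rewrite Rabs_R0; lra.
  eapply Rle_trans; [apply Rabs_triang|]. specialize (H n). lra. Qed.

Lemma ps_nonneg h n : (forall j, 0 <= h j) -> 0 <= ps h n.
Proof. intros H; induction n; simpl. lra. specialize (H n); lra. Qed.

Lemma ps_le_mono g h N K : (forall j, 0 <= h j) -> (forall j, (j < N)%nat -> g j <= h j) ->
  (N <= K)%nat -> ps g N <= ps h K.
Proof.
  intros H0 H1 HNK. induction HNK.
  - clear H0. induction N; simpl. lra.
    assert (ps g N <= ps h N) by (apply IHN; intros; apply H1; lia).
    specialize (H1 N ltac:(lia)). lra.
  - simpl. specialize (H0 m). lra.
Qed.

Lemma ps_tail h M K : (M <= K)%nat ->
  ps (fun j => if Nat.ltb j M then 0 else h j) K = ps h K - ps h M.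
Proof.
  intros H; induction H.
  - induction M; simpl. ring. rewrite (ps_ext _ (fun _ => 0)).
    + assert (ps (fun _ => 0) M = 0) by (clear; induction M; simpl; lra).
      rewrite H. replace (M <? S M)%nat with true by (symmetry; apply Nat.ltb_lt; lia). ring.
    + intros j Hj. replace (j <? S M)%nat with true by (symmetry; apply Nat.ltb_lt; lia). auto.
  - simpl. rewrite IHle. replace (m <? M)%nat with false by (symmetry; apply Nat.ltb_ge; lia). ring.
Qed.

Lemma ps_zero g K : (forall j, g j = 0) -> ps g K = 0.
Proof. intros H; induction K; simpl; auto. rewrite IHK, H; ring. Qed.

Lemma ps_single g j0 K : (j0 < K)%nat -> (forall j, j <> j0 -> g j = 0) -> ps g K = g j0.
Proof.
  intros H1 H2. induction K. lia. simpl.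
  destruct (Nat.eq_dec K j0).
  - subst. rewrite (ps_ext g (fun _ => 0)) by (intros; apply H2; lia).
    rewrite ps_zero by auto. ring.
  - rewrite IHK by lia. rewrite (H2 K n). ring.
Qed.


Definition injf (e : nat -> nat) := forall i j, e i = e j -> i = j.

Lemma fin_range e (inj : injf e) N : exists K, forall j, (e j < N)%nat -> (j < K)%nat.
Proof.
  induction N.
  - exists 0%nat. intros; lia.
  - destruct IHN as [K HK].
    destruct (classic (exists j0, e j0 = N)) as [[j0 Hj0]|Hn].
    + exists (Nat.max K (S j0)). intros j Hj.
      destruct (Nat.eq_dec (e j) N).
      * assert (j = j0) by (apply inj; lia). lia.
      * specialize (HK j ltac:(lia)). lia.
    + exists K. intros j Hj. destruct (Nat.eq_dec (e j) N).
      * exfalso; apply Hn; eauto.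
      * apply HK; lia.
Qed.

Lemma fin_bound (e : nat -> nat) M : exists N0, forall j, (j < M)%nat -> (e j < N0)%nat.
Proof.
  induction M.
  - exists 0%nat; intros; lia.
  - destruct IHM as [N0 H]. exists (Nat.max N0 (S (e M))). intros j Hj.
    destruct (Nat.eq_dec j M). subst; lia. specialize (H j ltac:(lia)); lia.
Qed.

Definition ind (e : nat -> nat) (w : nat -> R) (N : nat) (j : nat) : R :=
  if Nat.ltb (e j) N then w j else 0.

Lemma key_fin e (inj : injf e) (w d : nat -> R)
  (Hd1 : forall j, d (e j) = w j) (Hd0 : forall n, (forall j, e j <> n) -> d n = 0) :
  forall N K, (forall j, (e j < N)%nat -> (j < K)%nat) -> ps d N = ps (ind e w N) K.
Proof.
  induction N; intros K HK.
  - simpl. symmetry. apply ps_zero. intros j. unfold ind.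
    replace (e j <? 0)%nat with false by (symmetry; apply Nat.ltb_ge; lia). auto.
  - simpl. rewrite (IHN K) by (intros; apply HK; lia).
    rewrite (ps_ext (ind e w (S N)) (fun j => ind e w N j + (if Nat.eqb (e j) N then w j else 0))).
    2:{ intros j _. unfold ind. destruct (Nat.eq_dec (e j) N).
        - replace (e j <? S N)%nat with true by (symmetry; apply Nat.ltb_lt; lia).
          replace (e j <? N)%nat with false by (symmetry; apply Nat.ltb_ge; lia).
          replace (e j =? N)%nat with true by (symmetry; apply Nat.eqb_eq; lia). ring.
        - replace (e j =? N)%nat with false by (symmetry; apply Nat.eqb_neq; lia).
          destruct (Nat.ltb_spec (e j) N).
          + replace (e j <? S N)%nat with true by (symmetry; apply Nat.ltb_lt; lia). ring.
          + replace (e j <? S N)%nat with false by (symmetry; apply Nat.ltb_ge; lia). ring. }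
    rewrite ps_plus. f_equal.
    destruct (classic (exists j0, e j0 = N)) as [[j0 Hj0]|Hn].
    + rewrite (ps_single _ j0).
      * replace (e j0 =? N)%nat with true by (symmetry; apply Nat.eqb_eq; lia).
        rewrite <- Hj0. auto.
      * apply HK; lia.
      * intros j Hj. destruct (Nat.eqb_spec (e j) N); auto.
        exfalso. apply Hj, inj. lia.
    + rewrite ps_zero. apply Hd0. intros j Hj; apply Hn; eauto.
      intros j. destruct (Nat.eqb_spec (e j) N); auto. exfalso; apply Hn; eauto.
Qed.

Lemma L_R e (inj : injf e) (w d : nat -> R)
  (Hd1 : forall j, d (e j) = w j) (Hd0 : forall n, (forall j, e j <> n) -> d n = 0)
  (W Wa : R) (HW : is_series w W) (HWa : is_series (fun j => Rabs (w j)) Wa) :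
  is_series d W.
Proof.
  apply is_series_Reals in HW. apply is_series_Reals in HWa. apply is_series_Reals.
  intros eps Heps.
  destruct (HW (eps/2) ltac:(lra)) as [M1 HM1].
  destruct (HWa (eps/4) ltac:(lra)) as [M2 HM2].
  set (M0 := S (Nat.max M1 M2)).
  destruct (fin_bound e M0) as [N0 HN0].
  exists N0. intros n Hn. unfold R_dist. rewrite <- ps_sum_f.
  destruct (fin_range e inj (S n)) as [K0 HK0].
  set (K := Nat.max K0 M0).
  rewrite (key_fin e inj w d Hd1 Hd0 (S n) K) by (intros j Hj; specialize (HK0 j Hj); lia).
  assert (A1 : Rabs (ps w K - W) < eps/2).
  { specialize (HM1 (Nat.pred K) ltac:(lia)). unfold R_dist in HM1.
    rewrite <- ps_sum_f in HM1. replace (S (Nat.pred K)) with K in HM1 by lia. exact HM1. }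
  assert (A2 : ps (fun j => Rabs (w j)) K - ps (fun j => Rabs (w j)) M0 < eps/2).
  {
    pose proof (HM2 (Nat.pred K) ltac:(lia)) as HK'.
    pose proof (HM2 (Nat.pred M0) ltac:(lia)) as HM'.
    unfold R_dist in *. rewrite <- !ps_sum_f in *.
    replace (S (Nat.pred K)) with K in * by lia.
    replace (S (Nat.pred M0)) with M0 in * by lia.
    apply Rabs_def2 in HK'. apply Rabs_def2 in HM'. lra. }
  assert (A3 : Rabs (ps w K - ps (ind e w (S n)) K) <= ps (fun j => Rabs (w j)) K - ps (fun j => Rabs (w j)) M0).
  { rewrite <- ps_minus, <- ps_tail by lia. apply ps_abs_le. intros j.
    unfold ind. destruct (Nat.ltb_spec j M0).
    - specialize (HN0 j H). replace (e j <? S n)%nat with true by (symmetry; apply Nat.ltb_lt; lia).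
      replace (w j - w j) with 0 by ring. rewrite Rabs_R0; lra.
    - destruct (e j <? S n)%nat. replace (w j - w j) with 0 by ring. rewrite Rabs_R0. apply Rabs_pos.
      replace (w j - 0) with (w j) by ring. lra. }
  replace (ps (ind e w (S n)) K - W) with ((ps w K - W) - (ps w K - ps (ind e w (S n)) K)) by ring.
  eapply Rle_lt_trans. apply Rabs_triang. rewrite Rabs_Ropp. lra.
Qed.


Lemma ps_le_series f Sv : (forall j, 0 <= f j) -> is_series f Sv -> forall n, ps f n <= Sv.
Proof.
  intros H0 HS n. apply is_series_Reals in HS.
  assert (ps f n <= ps f (S n)) by (simpl; specialize (H0 n); lra).
  rewrite ps_sum_f in H. eapply Rle_trans; [exact H|].
  apply (growing_ineq (fun n => sum_f_R0 f n)). intros k; simpl. specialize (H0 (S k)); lra.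
  exact HS.
Qed.

Lemma A_R e (inj : injf e) (f : nat -> R) (H0 : forall n, 0 <= f n) (Sv : R) (HS : is_series f Sv) :
  ex_series (fun j => f (e j)).
Proof.
  set (d := fun n => if excluded_middle_informative (exists j, e j = n) then f n else 0).
  assert (Hd1 : forall j, d (e j) = f (e j)).
  { intros j. unfold d. destruct excluded_middle_informative as [_|Hn]; auto. exfalso; eauto. }
  assert (Hd0 : forall n, (forall j, e j <> n) -> d n = 0).
  { intros n Hn. unfold d. destruct excluded_middle_informative as [[j Hj]|_]; auto. exfalso; eapply Hn; eauto. }
  assert (Hb : forall N, ps (fun j => f (e j)) N <= Sv).
  { intros N. destruct (fin_bound e N) as [B HB].
    destruct (fin_range e inj B) as [K HK].
    eapply Rle_trans with (ps (ind e (fun j => f (e j)) B) (Nat.max K N)).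
    - apply ps_le_mono; [| |lia].
      + intros j; unfold ind; destruct (e j <? B)%nat; auto; lra.
      + intros j Hj. unfold ind. replace (e j <? B)%nat with true by (symmetry; apply Nat.ltb_lt; auto). lra.
    - rewrite <- (key_fin e inj (fun j => f (e j)) d Hd1 Hd0) by (intros j Hj; specialize (HK j Hj); lia).
      eapply Rle_trans with (ps f B).
      + apply ps_le_mono; auto. intros j _. unfold d. destruct excluded_middle_informative; auto; lra.
      + apply ps_le_series; auto. }
  destruct (growing_cv (fun n => sum_f_R0 (fun j => f (e j)) n)) as [l Hl].
  - intros k; simpl. specialize (H0 (e (S k))); lra.
  - exists Sv. intros x [i ->]. rewrite <- ps_sum_f. apply Hb.
  - exists l. apply is_series_Reals. exact Hl.
Qed.


Lemma sum_n_fst (u : nat -> C) n : fst (sum_n u n) = sum_n (fun k => fst (u k)) n.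
Proof. induction n. rewrite !sum_O; auto. rewrite !sum_Sn. simpl. rewrite <- IHn. reflexivity. Qed.
Lemma sum_n_snd (u : nat -> C) n : snd (sum_n u n) = sum_n (fun k => snd (u k)) n.
Proof. induction n. rewrite !sum_O; auto. rewrite !sum_Sn. simpl. rewrite <- IHn. reflexivity. Qed.

Lemma is_series_C_fst (u : nat -> C) l :
  is_series (K := C_AbsRing) (V := C_NormedModule) u l -> is_series (fun n => fst (u n)) (fst l).
Proof.
  unfold is_series. intros H. eapply filterlim_ext. intros; apply sum_n_fst.
  eapply filterlim_comp; [exact H|]. intros P [eps HP]. exists eps. intros y Hy. apply HP. apply Hy.
Qed.
Lemma is_series_C_snd (u : nat -> C) l :
  is_series (K := C_AbsRing) (V := C_NormedModule) u l -> is_series (fun n => snd (u n)) (snd l).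
Proof.
  unfold is_series. intros H. eapply filterlim_ext. intros; apply sum_n_snd.
  eapply filterlim_comp; [exact H|]. intros P [eps HP]. exists eps. intros y Hy. apply HP. apply Hy.
Qed.

Lemma is_series_C_pair (u : nat -> C) l1 l2 :
  is_series (fun n => fst (u n)) l1 -> is_series (fun n => snd (u n)) l2 ->
  is_series (K := C_AbsRing) (V := C_NormedModule) u (l1, l2).
Proof.
  unfold is_series. intros H1 H2 P [eps HP].
  assert (E1 := H1 (ball l1 eps) (locally_ball l1 eps)).
  assert (E2 := H2 (ball l2 eps) (locally_ball l2 eps)).
  unfold filtermap in *. generalize (filter_and _ _ E1 E2). apply filter_imp. intros n [B1 B2].
  apply HP. split; [change (ball l1 eps (fst (sum_n u n))); rewrite sum_n_fst | change (ball l2 eps (snd (sum_n u n))); rewrite sum_n_snd]; assumption.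
Qed.

Lemma Cseries_is (u : nat -> C) l :
  is_series (K := C_AbsRing) (V := C_NormedModule) u l ->
  (Series (fun n => fst (u n)), Series (fun n => snd (u n))) = l.
Proof.
  intros H. rewrite (is_series_unique _ _ (is_series_C_fst _ _ H)).
  rewrite (is_series_unique _ _ (is_series_C_snd _ _ H)). destruct l; auto.
Qed.

Lemma L_C e (inj : injf e) (w d : nat -> C)
  (Hd1 : forall j, d (e j) = w j) (Hd0 : forall n, (forall j, e j <> n) -> d n = 0%C)
  (W : C) (HW : is_series (K := C_AbsRing) (V := C_NormedModule) w W)
  (Ha : ex_series (fun j => Cmod (w j))) :
  is_series (K := C_AbsRing) (V := C_NormedModule) d W.
Proof.
  destruct W as [W1 W2].
  assert (Ha1 : ex_series (fun j => Rabs (fst (w j)))).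
  { eapply (ex_series_le (K:=R_AbsRing) (V:=R_CompleteNormedModule)); [|exact Ha].
    intros n. simpl. rewrite Rabs_Rabsolu. apply re_le_Cmod. }
  assert (Ha2 : ex_series (fun j => Rabs (snd (w j)))).
  { eapply (ex_series_le (K:=R_AbsRing) (V:=R_CompleteNormedModule)); [|exact Ha].
    intros n. simpl. rewrite Rabs_Rabsolu. pose proof (Rmax_Cmod (w n)). 
    eapply Rle_trans; [|exact H]. apply Rmax_r. }
  destruct Ha1 as [A1 HA1]. destruct Ha2 as [A2 HA2].
  apply is_series_C_pair.
  - apply (L_R e inj (fun j => fst (w j)) (fun n => fst (d n))) with A1; auto.
    + intros j; rewrite Hd1; auto.
    + intros n Hn; rewrite Hd0; auto.
    + apply (is_series_C_fst _ _ HW).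
  - apply (L_R e inj (fun j => snd (w j)) (fun n => snd (d n))) with A2; auto.
    + intros j; rewrite Hd1; auto.
    + intros n Hn; rewrite Hd0; auto.
    + apply (is_series_C_snd _ _ HW).
Qed.


Lemma cv1_ge x : Rabs x < 1 -> Rbar_le (Rabs x) (CV_radius (fun _ => 1)).
Proof.
  intros Hx. apply Rbar_not_lt_le. intros H. apply (CV_disk_outside _ _ H).
  eapply is_lim_seq_ext; [|apply is_lim_seq_geom; exact Hx]. intros; simpl; ring.
Qed.

Lemma cv1_lt r : 0 <= r < 1 -> Rbar_lt (Rabs r) (CV_radius (fun _ => 1)).
Proof.
  intros Hr. apply Rbar_lt_le_trans with ((1 + r)/2).
  - simpl. rewrite Rabs_right by lra. lra.
  - replace ((1 + r)/2) with (Rabs ((1+r)/2)) by (rewrite Rabs_right; lra).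
    apply cv1_ge. rewrite Rabs_right; lra.
Qed.

Lemma ser_n2 r : 0 <= r < 1 -> ex_series (fun n => INR n * INR n * r ^ n).
Proof.
  intros Hr.
  assert (H : ex_pseries (PS_derive (PS_derive (fun _ => 1))) r).
  { apply CV_radius_inside. rewrite !CV_radius_derive. apply cv1_lt; auto. }
  apply ex_pseries_R in H.
  eapply (ex_series_le (K:=R_AbsRing) (V:=R_CompleteNormedModule)); [|exact H].
  intros n. unfold PS_derive. change (norm ?x) with (Rabs x).
  pose proof (pow_le r n ltac:(lra)). pose proof (pos_INR n).
  rewrite Rabs_right by (apply Rle_ge; repeat apply Rmult_le_pos; lra).
  rewrite !S_INR. nra.
Qed.

Lemma ser_n r : 0 <= r < 1 -> ex_series (fun n => INR n * r ^ n).
Proof.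
  intros Hr.
  assert (H : ex_pseries (PS_derive (fun _ => 1)) r).
  { apply CV_radius_inside. rewrite !CV_radius_derive. apply cv1_lt; auto. }
  apply ex_pseries_R in H.
  eapply (ex_series_le (K:=R_AbsRing) (V:=R_CompleteNormedModule)); [|exact H].
  intros n. unfold PS_derive. change (norm ?x) with (Rabs x).
  pose proof (pow_le r n ltac:(lra)). pose proof (pos_INR n).
  rewrite Rabs_right by (apply Rle_ge; repeat apply Rmult_le_pos; lra).
  rewrite !S_INR. nra.
Qed.

Fixpoint Pd (z : C) (n : nat) : C :=
  match n with 0%nat => 0%C | S n => (z * Pd z n + Cpow z n)%C end.

Lemma bound_E y z r n : 0 < r -> Cmod y <= r -> Cmod z <= r ->
  r * Cmod (Cpow y n - Cpow z n) <= INR n * r ^ n * Cmod (y - z).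
Proof.
  intros Hr Hy Hz. induction n.
  - replace (Cpow y 0 - Cpow z 0)%C with (RtoC 0) by (simpl; ring). rewrite Cmod_0. simpl; lra.
  - replace (Cpow y (S n) - Cpow z (S n))%C with (y * (Cpow y n - Cpow z n) + Cpow z n * (y - z))%C
      by (simpl; ring).
    pose proof (Cmod_triangle (y * (Cpow y n - Cpow z n)) (Cpow z n * (y - z))) as T1.
    rewrite !Cmod_mult, Cmod_pow in T1.
    pose proof (pow_incr (Cmod z) r n ltac:(split; [apply Cmod_ge_0|auto])) as Pz.
    pose proof (Cmod_ge_0 (Cpow y n - Cpow z n)). pose proof (Cmod_ge_0 (y - z)).
    pose proof (Cmod_ge_0 y). pose proof (pow_le (Cmod z) n (Cmod_ge_0 z)).
    pose proof (pos_INR n). pose proof (pow_le r n ltac:(lra)).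
    rewrite S_INR. simpl pow.
    assert (0 <= INR n * r ^ n * Cmod (y - z)) by (repeat apply Rmult_le_pos; auto).
    assert (Cmod y * (r * Cmod (Cpow y n - Cpow z n)) <= Cmod y * (INR n * r ^ n * Cmod (y - z)))
      by (apply Rmult_le_compat_l; auto).
    assert (Cmod y * (INR n * r ^ n * Cmod (y - z)) <= r * (INR n * r ^ n * Cmod (y - z)))
      by (apply Rmult_le_compat_r; auto).
    assert (r * (Cmod y * Cmod (Cpow y n - Cpow z n)) <= r * (INR n * r ^ n * Cmod (y - z))) by lra.
    assert (Cmod z ^ n * Cmod (y - z) <= r ^ n * Cmod (y - z)) by nra.
    set (Q := Cmod (y * (Cpow y n - Cpow z n) + Cpow z n * (y - z))) in *.
    assert (r * Q <= r * (Cmod y * Cmod (Cpow y n - Cpow z n) + Cmod z ^ n * Cmod (y - z)))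
      by (apply Rmult_le_compat_l; lra).
    assert (r * (Cmod z ^ n * Cmod (y - z)) <= r * (r ^ n * Cmod (y - z)))
      by (apply Rmult_le_compat_l; lra).
    nra.
Qed.

Lemma bound_P z r n : 0 < r -> Cmod z <= r -> r * Cmod (Pd z n) <= INR n * r ^ n.
Proof.
  intros Hr Hz. induction n.
  - simpl. rewrite Cmod_0. lra.
  - simpl Pd. pose proof (Cmod_triangle (z * Pd z n) (Cpow z n)) as T1.
    rewrite Cmod_mult, Cmod_pow in T1.
    pose proof (pow_incr (Cmod z) r n ltac:(split; [apply Cmod_ge_0|auto])) as Pz.
    pose proof (Cmod_ge_0 (Pd z n)). pose proof (Cmod_ge_0 z).
    pose proof (pos_INR n). pose proof (pow_le r n ltac:(lra)).
    rewrite S_INR. simpl pow.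
    set (Q := Cmod (z * Pd z n + Cpow z n)) in *.
    assert (r * Q <= r * (Cmod z * Cmod (Pd z n) + Cmod z ^ n)) by (apply Rmult_le_compat_l; lra).
    assert (0 <= INR n * r ^ n) by (apply Rmult_le_pos; auto).
    assert (Cmod z * (r * Cmod (Pd z n)) <= Cmod z * (INR n * r ^ n)) by (apply Rmult_le_compat_l; auto).
    assert (Cmod z * (INR n * r ^ n) <= r * (INR n * r ^ n)) by (apply Rmult_le_compat_r; auto).
    assert (r * Cmod z ^ n <= r * r ^ n) by (apply Rmult_le_compat_l; lra).
    lra.
Qed.

Lemma bound_D y z r n : 0 < r -> Cmod y <= r -> Cmod z <= r ->
  r ^ 2 * Cmod (Cpow y n - Cpow z n - (y - z) * Pd z n) <= INR n * INR n * r ^ n * Cmod (y - z) ^ 2.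
Proof.
  intros Hr Hy Hz. induction n.
  - replace (Cpow y 0 - Cpow z 0 - (y - z) * Pd z 0)%C with (RtoC 0) by (simpl; ring). rewrite Cmod_0. simpl; lra.
  - replace (Cpow y (S n) - Cpow z (S n) - (y - z) * Pd z (S n))%C with
      ((y - z) * (Cpow y n - Cpow z n) + z * (Cpow y n - Cpow z n - (y - z) * Pd z n))%C
      by (simpl; ring).
    pose proof (Cmod_triangle ((y - z) * (Cpow y n - Cpow z n)) (z * (Cpow y n - Cpow z n - (y - z) * Pd z n))) as T1.
    rewrite !Cmod_mult in T1.
    pose proof (bound_E y z r n Hr Hy Hz) as HE.
    set (E := Cmod (Cpow y n - Cpow z n)) in *.
    set (D := Cmod (Cpow y n - Cpow z n - (y - z) * Pd z n)) in *.
    set (d := Cmod (y - z)) in *.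
    assert (0 <= E) by apply Cmod_ge_0. assert (0 <= D) by apply Cmod_ge_0.
    assert (0 <= d) by apply Cmod_ge_0. pose proof (Cmod_ge_0 z).
    pose proof (pos_INR n). pose proof (pow_le r n ltac:(lra)).
    rewrite S_INR. simpl pow. simpl pow in IHn.
    assert (r * d * (r * E) <= r * d * (INR n * r ^ n * d)) by (apply Rmult_le_compat_l; nra).
    assert (0 <= INR n * INR n * r ^ n * (d * (d * 1))) by (repeat apply Rmult_le_pos; lra).
    assert (Cmod z * (r * (r * 1) * D) <= Cmod z * (INR n * INR n * r ^ n * (d * (d * 1))))
      by (apply Rmult_le_compat_l; lra).
    assert (Cmod z * (INR n * INR n * r ^ n * (d * (d * 1))) <= r * (INR n * INR n * r ^ n * (d * (d * 1))))
      by (apply Rmult_le_compat_r; lra).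
    set (Q := Cmod ((y - z) * (Cpow y n - Cpow z n) + z * (Cpow y n - Cpow z n - (y - z) * Pd z n))) in *.
    assert (r * (r * 1) * Q <= r * (r * 1) * (d * E + Cmod z * D)) by (apply Rmult_le_compat_l; nra).
    assert (0 <= r * r ^ n * d * d * (INR n + 1)) by (repeat apply Rmult_le_pos; lra).
    lra.
Qed.

Lemma series_norm_le (u : nat -> C) L (b : nat -> R) B :
  is_series (K := C_AbsRing) (V := C_NormedModule) u L -> is_series b B ->
  (forall n, Cmod (u n) <= b n) -> Cmod L <= B.
Proof.
  intros Hu Hb Hub.
  assert (H : Rbar_le (Cmod L) B).
  { apply (filterlim_le (F:=eventually) (fun n => Cmod (sum_n u n)) (sum_n b)).
    - apply filter_forall. intros n. eapply Rle_trans.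
      apply (norm_sum_n_m (K:=C_AbsRing) (V:=C_NormedModule) u 0 n).
      apply sum_n_m_le. intros k. apply Hub.
    - eapply filterlim_comp; [exact Hu|]. apply (filterlim_norm (K:=C_AbsRing) (V:=C_NormedModule)).
    - exact Hb. }
  exact H.
Qed.

Lemma series_nonneg (b : nat -> R) B : is_series b B -> (forall n, 0 <= b n) -> 0 <= B.
Proof. intros H H0. apply (ps_le_series b B H0 H 0). Qed.


Lemma deriv_ps (a : nat -> C) (A : R) (HA0 : 0 <= A) (HA : forall n, Cmod (a n) <= A)
  (f : C -> C)
  (Hf : forall y, Cmod y < 1 -> is_series (K := C_AbsRing) (V := C_NormedModule) (fun n => (a n * Cpow y n)%C) (f y))
  (z : C) (Hz : Cmod z < 1) : ex_derive (K := C_AbsRing) (V := C_NormedModule) f z.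
Proof.
  pose proof (Cmod_ge_0 z) as Hz0.
  set (r := (1 + Cmod z) / 2).
  assert (Hr0 : 0 < r) by (unfold r; lra).
  assert (Hr1 : r < 1) by (unfold r; lra).
  assert (Hzr : Cmod z < r) by (unfold r; lra).
  destruct (ser_n2 r ltac:(lra)) as [S2 HS2].
  destruct (ser_n r ltac:(lra)) as [S1 HS1].
  assert (HS2p : 0 <= S2).
  { apply (series_nonneg _ _ HS2). intros n. pose proof (pos_INR n). pose proof (pow_le r n ltac:(lra)).
    repeat apply Rmult_le_pos; auto. }
  assert (HP : ex_series (K := C_AbsRing) (V := C_NormedModule) (fun n => (a n * Pd z n)%C)).
  { apply (ex_series_le (K:=C_AbsRing) (V:=C_CompleteNormedModule)) with (fun n => A / r * (INR n * r ^ n)).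
    - intros n. change (norm ?x) with (Cmod x). rewrite Cmod_mult.
      pose proof (bound_P z r n Hr0 ltac:(lra)). pose proof (Cmod_ge_0 (Pd z n)).
      pose proof (HA n).
      assert (A / r >= 0). { apply Rle_ge. apply Rmult_le_pos; auto. left; apply Rinv_0_lt_compat; auto. }
      replace (A * Cmod (Pd z n)) with (A / r * (r * Cmod (Pd z n))) in * by (field; lra).
      assert (Cmod (a n) * Cmod (Pd z n) <= A * Cmod (Pd z n)) by (apply Rmult_le_compat_r; auto).
      replace (A * Cmod (Pd z n)) with (A / r * (r * Cmod (Pd z n))) in * by (field; lra).
      assert (A / r * (r * Cmod (Pd z n)) <= A / r * (INR n * r ^ n)) by (apply Rmult_le_compat_l; lra).
      lra.
    - exists (A / r * S1). apply (is_series_scal_l (K:=R_AbsRing) (V:=R_NormedModule) (A / r)) in HS1.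
      exact HS1. }
  destruct HP as [l Hl].
  exists l. split. apply is_linear_scal_l.
  intros x Hx. pose proof (is_filter_lim_locally_unique (K:=C_AbsRing) (V:=AbsRing_NormedModule C_AbsRing) z x Hx) as Hzx. subst x.
  intros eps. apply (locally_le_locally_norm (K:=C_AbsRing) (V:=AbsRing_NormedModule C_AbsRing)).
  set (Kc := A * S2 / r ^ 2).
  assert (HKc : 0 <= Kc).
  { unfold Kc. apply Rmult_le_pos. apply Rmult_le_pos; auto. left; apply Rinv_0_lt_compat. apply pow_lt; auto. }
  assert (Hd : 0 < Rmin ((1 - Cmod z) / 2) (eps / (Kc + 1))).
  { apply Rmin_pos. lra. apply Rdiv_lt_0_compat. apply cond_pos. lra. }
  exists (mkposreal _ Hd). intros y Hy. unfold ball_norm in Hy. simpl in Hy.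
  change (norm (minus y z)) with (Cmod (y - z)) in Hy.
  pose proof (Rmin_l ((1 - Cmod z) / 2) (eps / (Kc + 1))).
  pose proof (Rmin_r ((1 - Cmod z) / 2) (eps / (Kc + 1))).
  assert (Hyr : Cmod y <= r).
  { replace y with (z + (y - z))%C by ring. pose proof (Cmod_triangle z (y - z)). unfold r; lra. }
  change (Cmod (f y - f z - (y - z) * l) <= eps * Cmod (y - z)).
  assert (Hsum : is_series (K := C_AbsRing) (V := C_NormedModule)
     (fun n => (a n * (Cpow y n - Cpow z n - (y - z) * Pd z n))%C) (f y - f z - (y - z) * l)%C).
  { pose proof (is_series_minus _ _ _ _ (Hf y ltac:(lra)) (Hf z Hz)) as H1.
    pose proof (is_series_scal_l (y - z)%C _ _ Hl) as H2.
    pose proof (is_series_minus _ _ _ _ H1 H2) as H3.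
    eapply is_series_ext; [|exact H3]. intros n. change ((a n * Cpow y n - a n * Cpow z n) - (y - z) * (a n * Pd z n) = a n * (Cpow y n - Cpow z n - (y - z) * Pd z n))%C. ring. }
  set (d := Cmod (y - z)) in *.
  pose proof (Cmod_ge_0 (y - z)) as Hd0. fold d in Hd0.
  assert (Hb : is_series (fun n => (A * (d ^ 2 / r ^ 2)) * (INR n * INR n * r ^ n)) (A * (d ^ 2 / r ^ 2) * S2)).
  { apply (is_series_scal_l (K:=R_AbsRing) (V:=R_NormedModule) (A * (d ^ 2 / r ^ 2))) in HS2. exact HS2. }
  pose proof (series_norm_le _ _ _ _ Hsum Hb) as HN.
  assert (HN2 : Cmod (f y - f z - (y - z) * l) <= A * (d ^ 2 / r ^ 2) * S2).
  { apply HN. intros n. rewrite Cmod_mult.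
    pose proof (bound_D y z r n Hr0 Hyr ltac:(lra)) as HD. fold d in HD.
    set (D := Cmod (Cpow y n - Cpow z n - (y - z) * Pd z n)) in *.
    assert (0 <= D) by apply Cmod_ge_0.
    assert (HD' : D <= d ^ 2 / r ^ 2 * (INR n * INR n * r ^ n)).
    { assert (0 < r ^ 2) by (apply pow_lt; auto).
      apply (Rmult_le_reg_l (r ^ 2)); auto.
      replace (r ^ 2 * (d ^ 2 / r ^ 2 * (INR n * INR n * r ^ n))) with (INR n * INR n * r ^ n * d ^ 2) by (field; lra).
      exact HD. }
    assert (0 <= d ^ 2 / r ^ 2 * (INR n * INR n * r ^ n)) by lra.
    assert (Cmod (a n) * D <= A * D) by (apply Rmult_le_compat_r; auto).
    assert (A * D <= A * (d ^ 2 / r ^ 2 * (INR n * INR n * r ^ n))) by (apply Rmult_le_compat_l; auto).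
    lra. }
  replace (A * (d ^ 2 / r ^ 2) * S2) with (Kc * d * d) in HN2 by (unfold Kc; field; lra).
  assert (Kc * d <= eps).
  { assert (d * (Kc + 1) <= eps).
    { assert (d <= eps / (Kc + 1)) by lra.
      apply (Rmult_le_compat_r (Kc + 1)) in H1; [|lra].
      replace (eps / (Kc + 1) * (Kc + 1)) with (pos eps) in H1 by (field; lra). exact H1. }
    nra. }
  assert (Kc * d * d <= eps * d) by (apply Rmult_le_compat_r; auto).
  lra.
Qed.


Lemma T_double x : T (2 * x) = x.
Proof.
  unfold T. assert (Nat.odd (2 * x) = false) by (rewrite <- Nat.negb_even, Nat.even_mul; reflexivity).
  rewrite H. rewrite Nat.mul_comm, Nat.div_mul by lia. reflexivity.
Qed.

Lemma T_e1 m p : T (m * 2 ^ S p) = (m * 2 ^ p)%nat.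
Proof. replace (m * 2 ^ S p)%nat with (2 * (m * 2 ^ p))%nat by (simpl; lia). apply T_double. Qed.

Lemma e1_inj m : (0 < m)%nat -> injf (fun p => m * 2 ^ p)%nat.
Proof.
  intros Hm i j H. apply Nat.mul_cancel_l in H; [|lia]. apply Nat.pow_inj_r in H; lia.
Qed.

Fixpoint Mx (m N : nat) : nat := match N with 0%nat => 0%nat | S N => Nat.max (Mx m N) (Titer N m) end.

Lemma Mx_spec m N t : (t < N)%nat -> (Titer t m <= Mx m N)%nat.
Proof. induction N; intros H; simpl. lia. destruct (Nat.eq_dec t N). subst; lia. specialize (IHN ltac:(lia)); lia. Qed.

Lemma periodic_bound m a p : (0 < p)%nat -> Titer (a + p) m = Titer a m ->
  forall n, (Titer n m <= Mx m (a + p))%nat.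
Proof.
  intros Hp Hper.
  assert (Hsh : forall n, (a <= n)%nat -> Titer (n + p) m = Titer n m).
  { intros n Hn. unfold Titer in *.
    replace (n + p)%nat with ((n - a) + (a + p))%nat by lia.
    rewrite Nat.iter_add, Hper. rewrite <- Nat.iter_add. f_equal. lia. }
  intros n. induction n as [n IH] using lt_wf_ind.
  destruct (Nat.lt_ge_cases n (a + p)).
  - apply Mx_spec; auto.
  - replace n with ((n - p) + p)%nat by lia. rewrite Hsh by lia. apply IH. lia.
Qed.

Lemma e2_inj m : unbounded_trajectory m -> injf (fun k => Titer (S k) m).
Proof.
  intros Hu i j H.
  assert (Hgen : forall i j, (i < j)%nat -> Titer (S i) m = Titer (S j) m -> False).
  { intros i' j' Hij Heq.
    pose proof (periodic_bound m (S i') (j' - i') ltac:(lia)) as PB.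
    replace (S i' + (j' - i'))%nat with (S j') in PB by lia.
    specialize (PB (eq_sym Heq)).
    destruct (Hu (Mx m (S j'))) as [k [_ Hk]]. specialize (PB k). lia. }
  destruct (lt_eq_lt_dec i j) as [[Hl|He]|Hl]; auto.
  - exfalso; eapply Hgen; eauto.
  - exfalso; eapply Hgen; eauto.
Qed.


Definition c_of (e : nat -> nat) (n : nat) : C :=
  if excluded_middle_informative (exists j, e j = n) then RtoC 1 else RtoC 0.

Definition coef (m : nat) (n : nat) : C :=
  (c_of (fun p => m * 2 ^ p)%nat n + c_of (fun k => Titer (S k) m) n)%C.

Lemma series_via e (inj : injf e) (g : nat -> C) W :
  is_series (K := C_AbsRing) (V := C_NormedModule) (fun j => g (e j)) W ->
  ex_series (fun j => Cmod (g (e j))) ->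
  is_series (K := C_AbsRing) (V := C_NormedModule) (fun n => (c_of e n * g n)%C) W.
Proof.
  intros HW Ha. apply (L_C e inj (fun j => g (e j))); auto.
  - intros j. unfold c_of. destruct excluded_middle_informative as [_|Hn].
    + apply Cmult_1_l.
    + exfalso; eauto.
  - intros n Hn. unfold c_of. destruct excluded_middle_informative as [[j Hj]|_].
    + exfalso; eapply Hn; eauto.
    + apply Cmult_0_l.
Qed.

Lemma norm_geom_inj e (inj : injf e) z : Cmod z < 1 -> ex_series (fun j => Cmod (Cpow z (e j))).
Proof.
  intros Hz. eapply ex_series_ext. intros j; symmetry; apply Cmod_pow.
  destruct (ex_series_geom (Cmod z)) as [Sv HSv].
  { rewrite Rabs_right; auto. apply Rle_ge, Cmod_ge_0. }
  apply (A_R e inj (fun n => Cmod z ^ n)) with Sv; auto.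
  intros n. apply pow_le, Cmod_ge_0.
Qed.

Lemma ex_C_of_norm (u : nat -> C) : ex_series (fun j => Cmod (u j)) ->
  ex_series (K := C_AbsRing) (V := C_NormedModule) u.
Proof.
  intros H. apply (ex_series_le (K:=C_AbsRing) (V:=C_CompleteNormedModule)) with (fun j => Cmod (u j)); auto.
  intros n. apply Rle_refl.
Qed.

Lemma Cmod_c_of e n : Cmod (c_of e n) <= 1.
Proof. unfold c_of. destruct excluded_middle_informative. rewrite Cmod_1; lra. rewrite Cmod_0; lra. Qed.

Lemma uniq_coef (a b : nat -> C) (f : C -> C)
  (Ha : forall z, Cmod z < 1 -> is_series (K := C_AbsRing) (V := C_NormedModule) (fun n => (a n * Cpow z n)%C) (f z))
  (Hb : forall z, Cmod z < 1 -> is_series (K := C_AbsRing) (V := C_NormedModule) (fun n => (b n * Cpow z n)%C) (f z)) :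
  forall n, a n = b n.
Proof.
  assert (Hreal : forall (a : nat -> C),
     (forall z, Cmod z < 1 -> is_series (K := C_AbsRing) (V := C_NormedModule) (fun n => (a n * Cpow z n)%C) (f z)) ->
     forall x, Rabs x < 1 ->
       is_series (fun n => fst (a n) * x ^ n) (fst (f (RtoC x))) /\
       is_series (fun n => snd (a n) * x ^ n) (snd (f (RtoC x)))).
  { intros a0 H0 x Hx. assert (Hc : Cmod (RtoC x) < 1) by (rewrite Cmod_R; auto).
    specialize (H0 _ Hc). split.
    - eapply is_series_ext; [|apply (is_series_C_fst _ _ H0)]. intros n. simpl.
      rewrite <- RtoC_pow. destruct (a0 n); simpl. ring.
    - eapply is_series_ext; [|apply (is_series_C_snd _ _ H0)]. intros n. simpl.
      rewrite <- RtoC_pow. destruct (a0 n); simpl. ring. }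
  assert (Hcv : forall (c : nat -> R) (g : R -> R), (forall x, Rabs x < 1 -> is_series (fun n => c n * x ^ n) (g x)) ->
     Rbar_lt 0 (CV_radius c)).
  { intros c g Hg. apply Rbar_lt_le_trans with (1/2). simpl; lra.
    apply Rbar_not_lt_le. intros Hlt.
    replace (1/2) with (Rabs (1/2)) in Hlt by (rewrite Rabs_right; lra).
    apply (CV_disk_outside _ _ Hlt). apply ex_series_lim_0. exists (g (1/2)). apply Hg.
    rewrite Rabs_right; lra. }
  assert (Hloc : forall (c d : nat -> R) (g : R -> R),
     (forall x, Rabs x < 1 -> is_series (fun n => c n * x ^ n) (g x)) ->
     (forall x, Rabs x < 1 -> is_series (fun n => d n * x ^ n) (g x)) ->
     forall n, c n = d n).
  { intros c d g Hc Hd n. apply PSeries_ext_recip.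
    - apply (Hcv c g Hc).
    - apply (Hcv d g Hd).
    - exists (mkposreal 1 Rlt_0_1). intros x Hx.
      assert (Rabs x < 1).
      { unfold ball in Hx; simpl in Hx. unfold AbsRing_ball, abs, minus, plus, opp in Hx; simpl in Hx.
        change (Rabs (x + - 0) < 1) in Hx. rewrite Ropp_0, Rplus_0_r in Hx. exact Hx. }
      unfold PSeries. rewrite (is_series_unique _ _ (Hc x H)), (is_series_unique _ _ (Hd x H)). auto. }
  intros n.
  assert (E1 : fst (a n) = fst (b n)).
  { apply (Hloc (fun n => fst (a n)) (fun n => fst (b n)) (fun x => fst (f (RtoC x)))).
    - intros x Hx; apply (Hreal a Ha x Hx).
    - intros x Hx; apply (Hreal b Hb x Hx). }
  assert (E2 : snd (a n) = snd (b n)).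
  { apply (Hloc (fun n => snd (a n)) (fun n => snd (b n)) (fun x => snd (f (RtoC x)))).
    - intros x Hx; apply (Hreal a Ha x Hx).
    - intros x Hx; apply (Hreal b Hb x Hx). }
  destruct (a n), (b n); simpl in *; subst; auto.
Qed.


Theorem mainTheorem4 (m : nat) (Hm : (0 < m)%nat) (Hdiv : unbounded_trajectory m) :
  (forall z : C, inD z ->
     ex_series (K := C_AbsRing) (V := C_NormedModule) (F_part1 m z) /\
     ex_series (K := C_AbsRing) (V := C_NormedModule) (F_part2 m z)) /\
  in_AD (F m) /\
  (exists a : nat -> C, power_series_rep a (F m)) /\
  (forall a : nat -> C, power_series_rep a (F m) -> collatz_op_image a (F m)).
Proof.
  pose proof (e1_inj m Hm) as I1. pose proof (e2_inj m Hdiv) as I2.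
  assert (N1 : forall z, inD z -> ex_series (fun j => Cmod (F_part1 m z j)))
    by (intros z Hz; apply (norm_geom_inj _ I1 z Hz)).
  assert (N2 : forall z, inD z -> ex_series (fun j => Cmod (F_part2 m z j)))
    by (intros z Hz; apply (norm_geom_inj _ I2 z Hz)).
  assert (Hex : forall z : C, inD z ->
     ex_series (K := C_AbsRing) (V := C_NormedModule) (F_part1 m z) /\
     ex_series (K := C_AbsRing) (V := C_NormedModule) (F_part2 m z)).
  { intros z Hz. split; apply ex_C_of_norm; auto. }
  assert (HF : forall z, inD z -> exists S1 S2,
     is_series (K := C_AbsRing) (V := C_NormedModule) (F_part1 m z) S1 /\
     is_series (K := C_AbsRing) (V := C_NormedModule) (F_part2 m z) S2 /\
     F m z = (S1 + S2)%C).
  { intros z Hz. destruct (Hex z Hz) as [[S1 H1] [S2 H2]]. exists S1, S2. split; [|split]; auto.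
    unfold F, Cseries. rewrite (Cseries_is _ _ H1), (Cseries_is _ _ H2). reflexivity. }
  assert (Hrep : power_series_rep (coef m) (F m)).
  { intros z Hz. destruct (HF z Hz) as [S1 [S2 [H1 [H2 ->]]]].
    pose proof (series_via _ I1 (fun n => Cpow z n) S1 H1 (N1 z Hz)) as A1.
    pose proof (series_via _ I2 (fun n => Cpow z n) S2 H2 (N2 z Hz)) as A2.
    pose proof (is_series_plus _ _ _ _ A1 A2) as A3.
    eapply is_series_ext; [|exact A3]. intros n. unfold coef.
    change ((c_of (fun p => (m * 2 ^ p)%nat) n * Cpow z n + c_of (fun k => Titer (S k) m) n * Cpow z n)%C
      = ((c_of (fun p => (m * 2 ^ p)%nat) n + c_of (fun k => Titer (S k) m) n) * Cpow z n)%C). ring. }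
  split; [exact Hex|]. split; [|split].
  - intros z Hz. apply (deriv_ps (coef m) 2 ltac:(lra)).
    + intros n. unfold coef. eapply Rle_trans. apply Cmod_triangle.
      pose proof (Cmod_c_of (fun p => (m * 2 ^ p)%nat) n). pose proof (Cmod_c_of (fun k => Titer (S k) m) n). lra.
    + exact Hrep.
    + exact Hz.
  - exists (coef m). exact Hrep.
  - intros a Ha z Hz.
    pose proof (uniq_coef a (coef m) (F m) Ha Hrep) as Hac.
    destruct (HF z Hz) as [S1 [S2 [H1 [H2 ->]]]].
    assert (W1 : is_series (K := C_AbsRing) (V := C_NormedModule)
                   (fun p => Cpow z (T (m * 2 ^ p))) (S1 + Cpow z (T m))%C).
    { pose proof H1 as H1'.
      replace S1 with (S1 + Cpow z (T m) - Cpow z (T m))%C in H1' by ring.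
      apply is_series_decr_1. rewrite Nat.pow_0_r, Nat.mul_1_r.
      eapply is_series_ext; [|exact H1']. intros p. unfold F_part1. rewrite T_e1. reflexivity. }
    assert (NW1 : ex_series (fun p => Cmod (Cpow z (T (m * 2 ^ p))))).
    { apply ex_series_incr_1. eapply ex_series_ext; [|exact (N1 z Hz)].
      intros p. unfold F_part1. rewrite T_e1. reflexivity. }
    pose proof (series_via _ I1 (fun n => Cpow z (T n)) _ W1 NW1) as B1.
    assert (W2 : is_series (K := C_AbsRing) (V := C_NormedModule)
                   (fun k => Cpow z (T (Titer (S k) m))) (S2 - Cpow z (T m))%C).
    { change (is_series (K := C_AbsRing) (V := C_NormedModule) (fun k => F_part2 m z (S k)) (S2 - Cpow z (T m))%C).
      apply is_series_incr_1.
      pose proof H2 as H2'.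
      replace S2 with (S2 - Cpow z (T m) + Cpow z (T m))%C in H2' by ring.
      exact H2'. }
    assert (NW2 : ex_series (fun k => Cmod (Cpow z (T (Titer (S k) m))))).
    { apply (ex_series_incr_1 (fun k => Cmod (F_part2 m z k))). exact (N2 z Hz). }
    pose proof (series_via _ I2 (fun n => Cpow z (T n)) _ W2 NW2) as B2.
    pose proof (is_series_plus _ _ _ _ B1 B2) as B3.
    replace (S1 + S2)%C with ((S1 + Cpow z (T m)) + (S2 - Cpow z (T m)))%C by ring.
    eapply is_series_ext; [|exact B3]. intros n. rewrite Hac. unfold coef.
    change ((c_of (fun p => (m * 2 ^ p)%nat) n * Cpow z (T n) + c_of (fun k => Titer (S k) m) n * Cpow z (T n))%C
      = ((c_of (fun p => (m * 2 ^ p)%nat) n + c_of (fun k => Titer (S k) m) n) * Cpow z (T n))%C). ring.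
Qed.
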